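(* Let $X,Y$ be sets of numbers with $X<Y$ and let $a=(A\mid B)$ be a number (so $(A\mid B)$ is a cut in $T_{g(a)}$). Then $a$ is the unique number of minimal generation among all numbers $z$ with $X<z<Y$ if and only if the following three conditions hold: (i) $X<a<Y$; (ii) for every $t\in A$ there exists $x\in X$ with $x\geqslant t$; (iii) for every $t\in B$ there exists $y\in Y$ with $y\leqslant t$.
   Context: For a totally ordered set $E$, a cut in $E$ is a pair $(A\mid B)$ of subsets of $E$ with $A\cap B=\emptyset$, $A\cup B=E$ and $a\leqslant b$ for all $a\in A$, $b\in B$. The set $\mathcal C(E)$ of cuts is totally ordered by $(A\mid B)\leqslant (C\mid D)$ iff $A\subset C$. The amalgam $E\cup\mathcal C(E)$ (with $E$ and $\mathcal C(E)$ regarded as disjoint) is totally ordered by combining the orders on $E$ and on $\mathcal C(E)$ with the rule: for $x\in E$ and $c=(A\mid B)\in\mathcal C(E)$, $x<c$ if $x\in A$ and $c<x$ if $x\in B$. Numbers are built by transfinite recursion on ordinals $\alpha$: $T_\alpha=\bigcup_{\beta<\alpha}S_\beta$ (a totally ordered set), $S_\alpha=\mathcal C(T_\alpha)$ is the set of cuts in $T_\alpha$, and $T_{\alpha+1}=T_\alpha\cup S_\alpha$ carries the amalgam order. The class of numbers is $\mathsf S=\bigcup_\alpha S_\alpha$ with the resulting total order; the elements of $S_\alpha$ are the numbers of generation $\alpha$, written $g(a)=\alpha$. For sets of numbers, $X<z$ means $x<z$ for all $x\in X$, and $z<Y$ means $z<y$ for all $y\in Y$. For sets $X<Y$ of numbers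 there always exists a unique number of minimal generation among the numbers $z$ with $X<z<Y$. *)

(* Defs.v *)
From Stdlib Require Import Relations Wellfounded.

(* Generations are indexed by "ordinals": an arbitrary type [O] with a   *)
(* well-founded strict total order [ltO].                                *)
Definition is_ordinal_type (O : Type) (ltO : O -> O -> Prop) : Prop :=
  well_founded ltO /\
  (forall a b c, ltO a b -> ltO b c -> ltO a c) /\
  (forall a, ~ ltO a a) /\
  (forall a b, ltO a b \/ a = b \/ ltO b a).

Definition is_cut {N : Type} (lt : N -> N -> Prop) (E A B : N -> Prop) : Prop :=
  (forall x, ~ (A x /\ B x)) /\
  (forall x, E x <-> (A x \/ B x)) /\
  (forall a b, A a -> B b -> lt a b \/ a = b).

Section NumberSystem.
Context {O : Type} (ltO : O -> O -> Prop) {N : Type}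
        (lt : N -> N -> Prop) (g : N -> O).

(* T_alpha = union of S_beta for beta < alpha. *)
Definition T (alpha : O) (x : N) : Prop := ltO (g x) alpha.

(* The cut (A | B) of T_{g(a)} that the number a is. Via the amalgam   *)
(* order, t < a iff t \in A and a < t iff t \in B, for t in T_{g(a)}.   *)
Definition cutL (a : N) (t : N) : Prop := T (g a) t /\ lt t a.
Definition cutR (a : N) (t : N) : Prop := T (g a) t /\ lt a t.

(* (N, lt, g) is the class of numbers S built by the recursion:          *)
(*  - lt is a strict total order on N (= the union of the orders on T_a) *)
(*  - for every alpha, a |-> (cutL a | cutR a) is a bijection from       *)
(*    S_alpha = {a | g a = alpha} onto the cuts C(T_alpha)               *)
(*  - this bijection is an order isomorphism for the cut order           *)
(*    ((A|B) < (C|D) iff A is a proper subset of C).                    *)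
(*  The order between numbers of different generations is the amalgam    *)
(*  order, built into the definition of cutL / cutR.                      *)
Definition is_number_system : Prop :=
  is_ordinal_type O ltO /\
  (forall x, ~ lt x x) /\
  (forall x y z, lt x y -> lt y z -> lt x z) /\
  (forall x y, lt x y \/ x = y \/ lt y x) /\
  (forall a, is_cut lt (T (g a)) (cutL a) (cutR a)) /\
  (forall (alpha : O) (A B : N -> Prop), is_cut lt (T alpha) A B ->
     exists a, g a = alpha /\ (forall t, cutL a t <-> A t) /\
               (forall t, cutR a t <-> B t) /\
       forall a', g a' = alpha -> (forall t, cutL a' t <-> A t) -> a' = a) /\
  (forall a b, g a = g b ->
     (lt a b <-> ((forall t, cutL a t -> cutL b t) /\
                  exists t, cutL b t /\ ~ cutL a t))).

Definition between (X Y : N -> Prop) (z : N) : Prop :=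
  (forall x, X x -> lt x z) /\ (forall y, Y y -> lt z y).

Definition unique_min_gen_between (X Y : N -> Prop) (a : N) : Prop :=
  between X Y a /\
  (forall z, between X Y z -> ltO (g a) (g z) \/ g a = g z) /\
  (forall z, between X Y z -> g z = g a -> z = a).

End NumberSystem.

(* Main.v *)
Require Import Defs.
From Stdlib Require Import Classical.

Theorem mainTheorem3 (O : Type) (ltO : O -> O -> Prop) (N : Type)
    (lt : N -> N -> Prop) (g : N -> O)
    (HS : is_number_system ltO lt g)
    (X Y : N -> Prop) (HXY : forall x y, X x -> Y y -> lt x y) (a : N) :
  unique_min_gen_between ltO lt g X Y a <->
  (between lt X Y a /\
   (forall t, cutL ltO lt g a t -> exists x, X x /\ (lt t x \/ t = x)) /\
   (forall t, cutR ltO lt g a t -> exists y, Y y /\ (lt y t \/ y = t))).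
Proof.
  destruct HS as [[_ [HOtr [HOirr HOtot]]] [Hirr [Htr [Htot [_ [_ Hgen]]]]]].
  unfold unique_min_gen_between, between, cutL, cutR, T.
  assert (Hmid : forall u v, g u = g v -> lt u v ->
            exists t, ltO (g t) (g u) /\ lt u t /\ lt t v).
  { intros u v Huv Hlt. apply (proj1 (Hgen u v Huv)) in Hlt.
    destruct Hlt as [_ [t [[Ht1 Ht2] Ht3]]]. unfold cutL, T in *.
    exists t. rewrite Huv. split; [exact Ht1|]. split; [|exact Ht2].
    destruct (Htot t u) as [H|[H|H]].
    - exfalso. apply Ht3. split; [rewrite Huv; exact Ht1|exact H].
    - subst t. rewrite Huv in Ht1. exfalso. exact (HOirr _ Ht1).
    - exact H. }
  assert (Hnot : forall t, ltO (g t) (g a) -> ltO (g a) (g t) \/ g a = g t -> False).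
  { intros t H1 [H2|H2]. - exact (HOirr _ (HOtr _ _ _ H1 H2)).
    - rewrite H2 in H1. exact (HOirr _ H1). }
  split.
  - intros [[HX HY] [Hmin Huniq]]. split; [split; assumption|]. split.
    + intros t [Ht Hta]. apply NNPP. intro Hn.
      apply (Hnot t Ht). apply Hmin. split.
      * intros x Hx. destruct (Htot x t) as [H|[H|H]]; [exact H| |];
          exfalso; apply Hn; exists x; auto.
      * intros y Hy. exact (Htr _ _ _ Hta (HY y Hy)).
    + intros t [Ht Hta]. apply NNPP. intro Hn.
      apply (Hnot t Ht). apply Hmin. split.
      * intros x Hx. exact (Htr _ _ _ (HX x Hx) Hta).
      * intros y Hy. destruct (Htot t y) as [H|[H|H]]; [exact H| |];
          exfalso; apply Hn; exists y; auto.
  - intros [[HX HY] [HL HR]]. split; [split; assumption|].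
    assert (Hmin : forall z, (forall x, X x -> lt x z) -> (forall y, Y y -> lt z y) ->
              ltO (g a) (g z) \/ g a = g z).
    { intros z Hzx Hzy. destruct (HOtot (g a) (g z)) as [H|[H|H]]; auto.
      exfalso. destruct (Htot z a) as [H1|[H1|H1]].
      - destruct (HL z (conj H H1)) as [x [Hx [Hx1|Hx1]]].
        + exact (Hirr _ (Htr _ _ _ Hx1 (Hzx x Hx))).
        + subst x. exact (Hirr _ (Hzx z Hx)).
      - subst z. exact (HOirr _ H).
      - destruct (HR z (conj H H1)) as [y [Hy [Hy1|Hy1]]].
        + exact (Hirr _ (Htr _ _ _ Hy1 (Hzy y Hy))).
        + subst y. exact (Hirr _ (Hzy z Hy)). }
    split.
    + intros z [Hzx Hzy]. exact (Hmin z Hzx Hzy).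
    + intros z [Hzx Hzy] Hg. destruct (Htot z a) as [H1|[H1|H1]]; auto; exfalso.
      * destruct (Hmid z a Hg H1) as [t [Ht [Hzt Hta]]].
        rewrite Hg in Ht.
        destruct (HL t (conj Ht Hta)) as [x [Hx [Hx1|Hx1]]].
        -- exact (Hirr _ (Htr _ _ _ (Htr _ _ _ Hzt Hx1) (Hzx x Hx))).
        -- subst x. exact (Hirr _ (Htr _ _ _ Hzt (Hzx t Hx))).
      * destruct (Hmid a z (eq_sym Hg) H1) as [t [Ht [Hat Htz]]].
        destruct (HR t (conj Ht Hat)) as [y [Hy [Hy1|Hy1]]].
        -- exact (Hirr _ (Htr _ _ _ (Htr _ _ _ Hy1 Htz) (Hzy y Hy))).
        -- subst y. exact (Hirr _ (Htr _ _ _ Htz (Hzy t Hy))).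
Qed.
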